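(* Assume $\mathcal{Z}$ is norm-Euclidean. Then there is a constant $L>1$ such that for every digit string $s$ with $C_s$ nonempty, $\sup_{y\in T^{|s|}C_s}\omega_s(y)\le L\inf_{y\in T^{|s|}C_s}\omega_s(y)$.
   Context: $X=\mathbb{R}^d$ (including $\mathbb{C},\mathbb{H},\mathbb{O}$ as $\mathbb{R}^2,\mathbb{R}^4,\mathbb{R}^8$) with Euclidean norm and distance. $\iota:X\setminus\{0\}\to X\setminus\{0\}$ satisfies $|\iota x|=1/|x|$, $d(\iota x,\iota y)=d(x,y)/(|x||y|)$ and $\iota\circ\iota=\mathrm{id}$; $\iota(0)=0$. $\mathcal{Z}$ is a discrete additive subgroup with compact quotient, $K=\{x:d(x,0)\le d(x,z)\ \forall z\in\mathcal{Z}\}$ its Dirichlet region with a boundary choice so that each $x$ has a unique $[x]\in\mathcal{Z}$ with $x-[x]\in K$; norm-Euclidean means $\operatorname{rad}(K)=\sup_{x\in K}|x|<1$. $Tx=\iota x-[\iota x]$ ($x\ne0$), $T0=0$. Cylinders: $C_\emptyset=K$, $C_{as}=K\cap\iota(C_s+a)$. For $s=a_1\dots a_n$, $T_s=T_{a_n}\circ\cdots\circ T_{a_1}$ on $C_s$ with $T_a(x)=\iota x-a$, and $\omega_s(y)=|\det DT_s^{-1}(y)|$ with $T_s^{-1}=T_{a_1}^{-1}\circ\cdots\circ T_{a_n}^{-1}$, $T_a^{-1}(y)=\iota(y+a)$. *)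

(* Defs.v *)
From HB Require Import structures.
From mathcomp Require Import all_boot all_order all_algebra.
From mathcomp Require Import all_classical all_reals all_analysis.
Set Implicit Arguments. Unset Strict Implicit. Unset Printing Implicit Defensive.
Import Order.TTheory GRing.Theory Num.Theory.
Import numFieldNormedType.Exports.
Local Open Scope classical_set_scope.
Local Open Scope ring_scope.

Section Defs.
Context {R : realType} {d : nat}.
Local Notation X := 'rV[R]_d.

Definition enorm (x : X) : R := Num.sqrt (\sum_(i < d) x ord0 i ^+ 2).
Definition edist (x y : X) : R := enorm (x - y).

Definition is_inversion (iota : X -> X) : Prop :=
  [/\ iota 0 = 0,
      (forall x, x != 0 -> iota x != 0),
      (forall x, x != 0 -> enorm (iota x) = 1 / enorm x),
      (forall x y, x != 0 -> y != 0 ->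
         edist (iota x) (iota y) = edist x y / (enorm x * enorm y)) &
      (forall x, iota (iota x) = x)].

Definition is_cocompact_lattice (Zs : set X) : Prop :=
  [/\ Zs 0,
      (forall z w, Zs z -> Zs w -> Zs (z - w)),
      (exists2 r : R, 0 < r & forall z, Zs z -> z != 0 -> r <= enorm z) &
      (exists M : R, forall x, exists2 z, Zs z & edist x z <= M)].

Definition dirichlet (Zs : set X) : set X :=
  [set x | forall z, Zs z -> edist x 0 <= edist x z].

Definition is_boundary_choice (Zs : set X) (Kc : set X) (flr : X -> X) : Prop :=
  [/\ Kc `<=` dirichlet Zs,
      (forall x, Zs (flr x) /\ Kc (x - flr x)) &
      (forall x z, Zs z -> Kc (x - z) -> z = flr x)].

Definition norm_euclidean (Zs : set X) : Prop :=
  exists2 c : R, c < 1 & forall x, dirichlet Zs x -> enorm x <= c.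

Definition Tmap (iota flr : X -> X) (x : X) : X :=
  if x == 0 then 0 else iota x - flr (iota x).

Fixpoint cyl (Kc : set X) (iota : X -> X) (s : seq X) : set X :=
  match s with
  | [::] => Kc
  | a :: s' => Kc `&` (iota @` [set y + a | y in cyl Kc iota s'])
  end.

Definition Tinv (iota : X -> X) (s : seq X) : X -> X :=
  foldr (fun a f => (fun y => iota (y + a)) \o f) id s.

Definition omega (iota : X -> X) (s : seq X) (y : X) : R :=
  `| \det (lin1_mx ('d (Tinv iota s) y)) |.

End Defs.

(* Main.v *)
Require Import Defs.
From HB Require Import structures.
From mathcomp Require Import all_boot all_order all_algebra.
From mathcomp Require Import all_classical all_reals all_analysis.
From mathcomp Require Import ring lra.
Import Order.TTheory GRing.Theory Num.Theory.
Import numFieldNormedType.Exports.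
Local Open Scope classical_set_scope.
Local Open Scope ring_scope.

Set Implicit Arguments. Unset Strict Implicit. Unset Printing Implicit Defensive.


Section Alg.
Context {R : realType} {d : nat}.
Local Notation X := 'rV[R]_d.

Definition ip (x y : X) : R := \sum_(i < d) x ord0 i * y ord0 i.
Definition nsq (x : X) : R := ip x x.

Lemma ipC x y : ip x y = ip y x.
Proof. by apply: eq_bigr => i _; rewrite mulrC. Qed.
Lemma ipDl x y z : ip (x + y) z = ip x z + ip y z.
Proof. by rewrite /ip -big_split; apply: eq_bigr => i _; rewrite !mxE mulrDl. Qed.
Lemma ipNl x z : ip (- x) z = - ip x z.
Proof. by rewrite /ip -sumrN; apply: eq_bigr => i _; rewrite !mxE mulNr. Qed.
Lemma ipZl a x z : ip (a *: x) z = a * ip x z.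
Proof. by rewrite /ip mulr_sumr; apply: eq_bigr => i _; rewrite !mxE mulrA. Qed.
Lemma ipBl x y z : ip (x - y) z = ip x z - ip y z.
Proof. by rewrite ipDl ipNl. Qed.
Lemma ipDr x y z : ip z (x + y) = ip z x + ip z y.
Proof. by rewrite ipC ipDl !(ipC z). Qed.
Lemma ipBr x y z : ip z (x - y) = ip z x - ip z y.
Proof. by rewrite ipC ipBl !(ipC z). Qed.
Lemma ipZr a x z : ip z (a *: x) = a * ip z x.
Proof. by rewrite ipC ipZl ipC. Qed.
Lemma ip0l z : ip 0 z = 0.
Proof. by rewrite /ip big1 // => i _; rewrite mxE mul0r. Qed.
Lemma ip0r z : ip z 0 = 0.
Proof. by rewrite ipC ip0l. Qed.

Lemma nsq_ge0 x : 0 <= nsq x.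
Proof. by rewrite /nsq /ip sumr_ge0 // => i _; rewrite -expr2 sqr_ge0. Qed.

Lemma nsq_eq0 x : (nsq x == 0) = (x == 0).
Proof.
apply/idP/idP; last by move/eqP->; rewrite /nsq ip0l.
rewrite /nsq /ip psumr_eq0; last by move=> i _; rewrite -expr2 sqr_ge0.
move=> /allP H; apply/eqP/rowP => i; rewrite mxE.
have := H i (mem_index_enum _); rewrite /= mulf_eq0 orbb => /eqP //.
Qed.

Lemma nsq_gt0 x : x != 0 -> 0 < nsq x.
Proof. by move=> x0; rewrite lt_def nsq_eq0 x0 nsq_ge0. Qed.

Lemma nsqD x y : nsq (x + y) = nsq x + 2 * ip x y + nsq y.
Proof. rewrite /nsq ipDl !ipDr (ipC y x); ring. Qed.
Lemma nsqB x y : nsq (x - y) = nsq x - 2 * ip x y + nsq y.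
Proof. rewrite /nsq ipBl !ipBr (ipC y x); ring. Qed.
Lemma nsqZ a x : nsq (a *: x) = a ^+ 2 * nsq x.
Proof. rewrite /nsq ipZl ipZr; ring. Qed.
Lemma nsqN x : nsq (- x) = nsq x.
Proof. by rewrite /nsq ipNl ipC ipNl opprK. Qed.

Lemma enorm_nsq (x : X) : enorm x = Num.sqrt (nsq x).
Proof. by rewrite /enorm /nsq /ip; congr Num.sqrt; apply: eq_bigr => i _; rewrite expr2. Qed.

Lemma enorm_sq (x : X) : enorm x ^+ 2 = nsq x.
Proof. by rewrite enorm_nsq sqr_sqrtr // nsq_ge0. Qed.

Lemma edist_sq (x y : X) : Defs.edist x y ^+ 2 = nsq (x - y).
Proof. by rewrite /Defs.edist enorm_sq. Qed.

Lemma enorm_ge0 (x : X) : 0 <= enorm x.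
Proof. by rewrite enorm_nsq sqrtr_ge0. Qed.

End Alg.


Section Inv.
Context {R : realType} {d : nat}.
Local Notation X := 'rV[R]_d.
Variable iota : X -> X.
Hypothesis Hi : is_inversion iota.

Lemma iota0 : iota 0 = 0. Proof. by case: Hi. Qed.
Lemma iotaK x : iota (iota x) = x. Proof. by case: Hi. Qed.
Lemma iota_neq0 x : x != 0 -> iota x != 0. Proof. by case: Hi => _ H _ _ _; apply: H. Qed.

Lemma nsq_iota x : x != 0 -> nsq (iota x) = (nsq x)^-1.
Proof.
move=> x0; case: Hi => _ _ H _ _; by rewrite -!enorm_sq H // expr_div_n expr1n div1r.
Qed.

Lemma nsq_iotaB x y : x != 0 -> y != 0 ->
  nsq (iota x - iota y) = nsq (x - y) / (nsq x * nsq y).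
Proof.
move=> x0 y0; case: Hi => _ _ _ H _.
by rewrite -edist_sq H // expr_div_n exprMn !enorm_sq.
Qed.

Definition sgm (x : X) : X := (nsq x)^-1 *: x.

Lemma nsq_sig x : nsq (sgm x) = (nsq x)^-1.
Proof.
rewrite /sgm nsqZ; have [->|x0] := eqVneq x 0.
  by rewrite /nsq ip0l invr0 mulr0.
have n0 : nsq x != 0 by rewrite nsq_eq0.
by rewrite expr2 -mulrA mulVf // mulr1.
Qed.

Lemma sig_neq0 x : x != 0 -> sgm x != 0.
Proof. by move=> x0; rewrite -nsq_eq0 nsq_sig invr_eq0 nsq_eq0. Qed.

Lemma sgmK x : sgm (sgm x) = x.
Proof.
rewrite /sgm nsq_sig invrK scalerA; have [->|x0] := eqVneq x 0; first by rewrite scaler0.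
by rewrite mulfV ?scale1r // nsq_eq0.
Qed.

Lemma nsq_sigB x y : x != 0 -> y != 0 ->
  nsq (sgm x - sgm y) = nsq (x - y) / (nsq x * nsq y).
Proof.
move=> x0 y0; rewrite nsqB !nsq_sig /sgm ipZl ipZr nsqB.
have a0 : nsq x != 0 by rewrite nsq_eq0.
have b0 : nsq y != 0 by rewrite nsq_eq0.
field; by rewrite a0 b0.
Qed.

Definition Jm (x : X) : X := iota (sgm x).

Lemma Jm0 : Jm 0 = 0.
Proof. by rewrite /Jm /sgm scaler0 iota0. Qed.

Lemma nsq_Jm x : nsq (Jm x) = nsq x.
Proof.
have [->|x0] := eqVneq x 0; first by rewrite Jm0.
by rewrite /Jm nsq_iota ?sig_neq0 // nsq_sig invrK.
Qed.

Lemma nsq_JmB x y : nsq (Jm x - Jm y) = nsq (x - y).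
Proof.
have [->|x0] := eqVneq x 0; first by rewrite Jm0 !sub0r !nsqN nsq_Jm.
have [->|y0] := eqVneq y 0; first by rewrite Jm0 !subr0 nsq_Jm.
rewrite /Jm nsq_iotaB ?sig_neq0 // nsq_sigB // !nsq_sig.
have a0 : nsq x != 0 by rewrite nsq_eq0.
have b0 : nsq y != 0 by rewrite nsq_eq0.
field; by rewrite a0 b0.
Qed.

Lemma ip_Jm x y : ip (Jm x) (Jm y) = ip x y.
Proof.
have := nsq_JmB x y; rewrite !nsqB !nsq_Jm => H.
lra.
Qed.

Lemma nsq3 (u v t : X) : nsq (u - v - t) =
  nsq u + nsq v + nsq t - 2 * ip u v - 2 * ip u t + 2 * ip v t.
Proof. rewrite /nsq !ipBl !ipBr (ipC v u) (ipC t u) (ipC t v); ring. Qed.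

Lemma JmD x y : Jm (x + y) = Jm x + Jm y.
Proof.
apply/eqP; rewrite -subr_eq0 opprD addrA -nsq_eq0 nsq3 !nsq_Jm !ip_Jm -nsq3.
by rewrite nsq_eq0 -addrA -opprD subrr.
Qed.

Lemma JmZ a x : Jm (a *: x) = a *: Jm x.
Proof.
apply/eqP; rewrite -subr_eq0 -nsq_eq0 nsqB nsqZ ipZr !nsq_Jm ip_Jm.
have -> : 0 = nsq (a *: x - a *: x) by rewrite subrr /nsq ip0l.
by rewrite nsqB nsqZ ipZr /nsq ipZl.
Qed.

Lemma iotaE x : iota x = Jm (sgm x).
Proof. by rewrite /Jm sgmK. Qed.

End Inv.


Section Diff.
Context {R : realType}.

Lemma diff_sumF (V W : normedModType R) n (f df : 'I_n -> V -> W) (x : V) :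
  (forall i, differentiable (f i) x /\ ('d (f i) x : V -> W) = df i) ->
  differentiable (fun z => \sum_i f i z) x /\
  ('d (fun z => \sum_i f i z) x : V -> W) = (fun h => \sum_i df i h).
Proof.
move=> H; rewrite -!fct_sumE.
apply: (big_ind2 (fun F G => differentiable F x /\ ('d F x : V -> W) = G)).
- split; first exact: differentiable_cst.
  exact: diff_cst.
- move=> F1 G1 F2 G2 [d1 e1] [d2 e2]; split; first exact: differentiableD.
  by rewrite diffD // e1 e2.
- by move=> i _; apply: H.
Qed.

Context {d : nat}.
Local Notation X := 'rV[R]_d.

Lemma diff_coord (j : 'I_d) (x : X) :
  differentiable (fun z : X => z ord0 j) x /\
  ('d (fun z : X => z ord0 j) x : X -> R) = (fun h => h ord0 j).
Proof.
split; first exact: differentiable_coord.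
have lin : linear (fun z : X => z ord0 j) by move=> a u v; rewrite !mxE.
pose fL : {linear X -> R} := HB.pack (fun z : X => z ord0 j) (GRing.isLinear.Build _ _ _ _ _ lin).
by rewrite (@diff_lin _ _ _ fL) //; apply: coord_continuous.
Qed.

Lemma diff_nsq (x : X) :
  differentiable (@nsq R d) x /\
  ('d (@nsq R d) x : X -> R) = (fun h => 2 * ip x h).
Proof.
have E : (@nsq R d) = (fun z => \sum_(i < d) (fun z : X => z ord0 i * z ord0 i) z) by [].
have H : forall i : 'I_d, differentiable (fun z : X => z ord0 i * z ord0 i) x /\
   ('d (fun z : X => z ord0 i * z ord0 i) x : X -> R) = (fun h => x ord0 i * h ord0 i + x ord0 i * h ord0 i).
  move=> i; have [c1 c2] := diff_coord i x.
  have E2 : (fun z : X => z ord0 i * z ord0 i) = (fun z : X => z ord0 i) * (fun z : X => z ord0 i) by [].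
  rewrite E2; split; first exact: differentiableM.
  by rewrite diffM // c2.
have [D1 D2] := diff_sumF H.
rewrite E; split => //; rewrite D2; apply/funext => h; rewrite /ip mulr_sumr.
by apply: eq_bigr => i _; rewrite -mulr2n mulr_natl.
Qed.

Lemma diff_sumZ n (g dg : 'I_n -> X -> R) (v : 'I_n -> X) (x : X) :
  (forall i, differentiable (g i) x /\ ('d (g i) x : X -> R) = dg i) ->
  differentiable (fun z => \sum_i g i z *: v i) x /\
  ('d (fun z => \sum_i g i z *: v i) x : X -> X) = (fun h => \sum_i dg i h *: v i).
Proof.
move=> H; apply: (diff_sumF (f := fun i z => g i z *: v i) (df := fun i h => dg i h *: v i)).
move=> i; have [H1 H2] := H i; split; first exact: differentiableZl.
by rewrite diffZl // H2.
Qed.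

Lemma sigE (z : X) : sgm z = \sum_j ((nsq z)^-1 * z ord0 j) *: delta_mx ord0 j.
Proof.
rewrite /sgm {2}(row_sum_delta z) scaler_sumr; apply: eq_bigr => j _.
by rewrite scalerA.
Qed.

Lemma diff_sig (x : X) : x != 0 ->
  differentiable (@sgm R d) x /\
  ('d (@sgm R d) x : X -> X) =
    (fun h => (nsq x)^-1 *: h + (- (nsq x) ^- 2 * (2 * ip x h)) *: x).
Proof.
move=> x0; have n0 : nsq x != 0 by rewrite nsq_eq0.
have [N1 N2] := diff_nsq x.
have K1 : differentiable (fun z : X => (nsq z)^-1) x by apply: differentiableV.
have K2 : ('d (fun z : X => (nsq z)^-1) x : X -> R) = (fun h => - (nsq x) ^- 2 * (2 * ip x h)).
  by rewrite diffV // N2.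
have H : forall j : 'I_d, differentiable (fun z : X => (nsq z)^-1 * z ord0 j) x /\
  ('d (fun z : X => (nsq z)^-1 * z ord0 j) x : X -> R) =
  (fun h => (nsq x)^-1 * h ord0 j + x ord0 j * (- (nsq x) ^- 2 * (2 * ip x h))).
  move=> j; have [c1 c2] := diff_coord j x.
  have E2 : (fun z : X => (nsq z)^-1 * z ord0 j) = (fun z : X => (nsq z)^-1) * (fun z : X => z ord0 j) by [].
  rewrite E2; split; first exact: differentiableM.
  by rewrite diffM // c2 K2.
have [D1 D2] := diff_sumZ (fun j => delta_mx ord0 j) H.
have E : (@sgm R d) = (fun z => \sum_j ((nsq z)^-1 * z ord0 j) *: delta_mx ord0 j).
  by apply/funext => z; rewrite sigE.
rewrite E; split => //; rewrite D2; apply/funext => h /=.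
set t := - _ * _.
under eq_bigr do rewrite scalerDl.
rewrite big_split /=; congr (_ + _).
  by rewrite [in RHS](row_sum_delta h) scaler_sumr; apply: eq_bigr => j _; rewrite scalerA.
by rewrite [in RHS](row_sum_delta x) scaler_sumr; apply: eq_bigr => j _; rewrite scalerA mulrC.
Qed.

End Diff.


Section D4.
Context {R : realType} {d : nat}.
Local Notation X := 'rV[R]_d.

Lemma nsq_dsig (x h : X) : x != 0 ->
  nsq ((nsq x)^-1 *: h + (- (nsq x) ^- 2 * (2 * ip x h)) *: x) = ((nsq x)^-1) ^+ 2 * nsq h.
Proof.
move=> x0; have n0 : nsq x != 0 by rewrite nsq_eq0.
rewrite nsqD !nsqZ ipZl ipZr (ipC h x).
move: n0; rewrite /nsq; move: (ip x x) (ip x h) (ip h h) => n p q n0.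
rewrite -exprVn; set m := n^-1.
have mn : m * n = 1 by rewrite /m mulVf.
have -> : (- m ^+ 2 * (2 * p)) ^+ 2 * n = 4 * m ^+ 3 * p ^+ 2 * (m * n) by ring.
rewrite mn; ring.
Qed.

Variable iota : X -> X.
Hypothesis Hi : is_inversion iota.

Lemma JmE (z : X) : Jm iota z = \sum_j z ord0 j *: Jm iota (delta_mx ord0 j).
Proof.
rewrite {1}(row_sum_delta z).
rewrite (big_morph (Jm iota) (JmD Hi) (Jm0 Hi)); apply: eq_bigr => j _.
by rewrite JmZ.
Qed.

Lemma diff_Jm (y : X) : differentiable (Jm iota) y /\ ('d (Jm iota) y : X -> X) = Jm iota.
Proof.
have [D1 D2] := diff_sumZ (fun j => Jm iota (delta_mx ord0 j)) (fun j => diff_coord j y).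
have E : Jm iota = (fun z => \sum_j z ord0 j *: Jm iota (delta_mx ord0 j)).
  by apply/funext => z; rewrite JmE.
by rewrite E; split => //; rewrite D2.
Qed.

Lemma diff_iota (w : X) : w != 0 ->
  differentiable iota w /\
  ('d iota w : X -> X) = (fun h => Jm iota ((nsq w)^-1 *: h + (- (nsq w) ^- 2 * (2 * ip w h)) *: w)).
Proof.
move=> w0; have [S1 S2] := diff_sig w0.
have [J1 J2] := diff_Jm (sgm w).
have E : iota = Jm iota \o (@sgm R d) by apply/funext => z; exact: iotaE.
have D : differentiable (Jm iota \o (@sgm R d)) w by exact: differentiable_comp.
have DD : ('d (Jm iota \o (@sgm R d)) w : X -> X) =
  (fun h => Jm iota ((nsq w)^-1 *: h + (- (nsq w) ^- 2 * (2 * ip w h)) *: w)).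
  rewrite diff_comp //; apply/funext => h; rewrite /comp.
  have E1 : 'd (Jm iota) (sgm w) ('d (@sgm R d) w h) = Jm iota ('d (@sgm R d) w h) :=
    congr1 (fun f => f ('d (@sgm R d) w h)) J2.
  have E2 : 'd (@sgm R d) w h = (nsq w)^-1 *: h + (- (nsq w) ^- 2 * (2 * ip w h)) *: w :=
    congr1 (fun f => f h) S2.
  by rewrite E1 E2.
by rewrite {1 2}E; split; [exact: D | exact: DD].
Qed.

Lemma nsq_diota (w h : X) : w != 0 ->
  nsq ('d iota w h) = ((nsq w)^-1) ^+ 2 * nsq h.
Proof.
move=> w0; have [_ D] := diff_iota w0.
by rewrite (congr1 (fun f => f h) D) /= nsq_Jm // nsq_dsig.
Qed.

End D4.


Section D5.
Context {R : realType} {d : nat}.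
Local Notation X := 'rV[R]_d.

Lemma ip_delta (i : 'I_d) (v : X) : ip (delta_mx ord0 i) v = v ord0 i.
Proof.
rewrite /ip (bigD1 i) //= big1 => [|k ki]; first by rewrite !mxE !eqxx mul1r addr0.
by rewrite !mxE (negbTE ki) andbF mul0r.
Qed.

Lemma det_conformal (f : {linear X -> X}) (m : R) : 0 <= m ->
  (forall h, nsq (f h) = m ^+ 2 * nsq h) -> `|\det (lin1_mx f)| = m ^+ d.
Proof.
move=> m0 H.
have ipf u v : ip (f u) (f v) = m ^+ 2 * ip u v.
  have := H (u + v); rewrite linearD !nsqD !H.
  move: (ip (f u) (f v)) (ip u v) (nsq u) (nsq v) (m ^+ 2) => a b p q r E.
  lra.
set M := lin1_mx f.
have MM : M *m M^T = (m ^+ 2)%:M.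
  apply/matrixP => i j; rewrite !mxE.
  transitivity (ip (f (delta_mx ord0 i)) (f (delta_mx ord0 j))).
    by apply: eq_bigr => k _; rewrite !mxE.
  by rewrite ipf ip_delta !mxE eqxx /= eq_sym mulr_natr.
have D : \det M ^+ 2 = (m ^+ d) ^+ 2.
  by rewrite expr2 -{2}det_tr -det_mulmx MM det_scalar -!exprM mulnC.
apply/eqP; rewrite -(@eqrXn2 _ 2) ?normr_ge0 ?exprn_ge0 //.
by rewrite real_normK ?num_real // D.
Qed.

Lemma lin1_comp (f g : {linear X -> X}) :
  lin1_mx (f \o g) = lin1_mx g *m lin1_mx f.
Proof.
apply/row_matrixP => i; rewrite row_mul rowE !mul_rV_lin1.
by rewrite rowE mul_rV_lin1.
Qed.

End D5.


Section D6.
Context {R : realType} {d : nat}.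
Local Notation X := 'rV[R]_d.
Variable iota : X -> X.
Hypothesis Hi : is_inversion iota.

Fixpoint prodw (s : seq X) (y : X) : R :=
  match s with
  | [::] => 1
  | a :: s' => ((nsq (Tinv iota s' y + a))^-1) ^+ d * prodw s' y
  end.

Fixpoint wgood (s : seq X) (y : X) : Prop :=
  match s with
  | [::] => True
  | a :: s' => (Tinv iota s' y + a != 0) /\ wgood s' y
  end.

Lemma diff_shift (a u : X) :
  differentiable (fun z : X => z + a) u /\ ('d (fun z : X => z + a) u : X -> X) = id.
Proof.
have E : (fun z : X => z + a) = ((id : X -> X) + cst a) by [].
rewrite E; split; first exact: ex_diff.
rewrite diff_val; apply/funext => h /=.
by rewrite addr0.
Qed.

Lemma lin1_id : lin1_mx (id : X -> X) = 1%:M.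
Proof. by apply/matrixP => i j; rewrite !mxE eqxx eq_sym. Qed.

Lemma omega_prod s y : wgood s y ->
  differentiable (Tinv iota s) y /\ omega iota s y = prodw s y.
Proof.
elim: s => [_|a s IH [w0 /IH [D1 O1]]].
  have -> : Tinv iota [::] = (id : X -> X) by [].
  have I : is_diff y (id : X -> X) id by exact: is_diff_id.
  split; first exact: (ex_diff (is_diff_def := I)).
  have E2 : ('d (id : X -> X) y : X -> X) = id := diff_val (is_diff_def := I).
  rewrite /omega /prodw.
  have -> : Tinv iota [::] = (id : X -> X) by [].
  by rewrite E2 lin1_id det1 normr1.
set u := Tinv iota s y.
have [T1 T2] := diff_shift a u.
have [I1 I2] := diff_iota Hi w0.
have DA : differentiable (iota \o (fun z : X => z + a)) u := differentiable_comp T1 I1.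
have DA2 : ('d (iota \o (fun z : X => z + a)) u : X -> X) = 'd iota (u + a).
  apply: (etrans (diff_comp T1 I1)); apply/funext => h.
  have E3 : 'd (+%R^~ a) u h = h := congr1 (fun f => f h) T2.
  by rewrite /comp; apply: f_equal; exact: E3.
have E : Tinv iota (a :: s) = (iota \o (fun z : X => z + a)) \o Tinv iota s by [].
have DF : differentiable ((iota \o (fun z : X => z + a)) \o Tinv iota s) y :=
  differentiable_comp D1 DA.
have FE : ('d (Tinv iota (a :: s)) y : X -> X) =
   'd iota (u + a) \o 'd (Tinv iota s) y.
  apply: (etrans (diff_comp D1 DA)); apply/funext => h; rewrite /comp.
  exact: (congr1 (fun f => f ('d (Tinv iota s) y h)) DA2).
split; first exact: DF.
have L : lin1_mx ('d (Tinv iota (a :: s)) y) =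
   lin1_mx ('d (Tinv iota s) y) *m lin1_mx ('d iota (u + a)).
  apply: (etrans _ (lin1_comp _ _)).
  exact: (congr1 (@lin1_mx _ _ _) FE).
rewrite /omega; apply: (etrans (congr1 (fun M => `|\det M|) L)).
rewrite det_mulmx normrM.
have DC : `|\det (lin1_mx ('d iota (u + a)))| = ((nsq (u + a))^-1) ^+ d.
  apply: det_conformal; first by rewrite invr_ge0 nsq_ge0.
  by move=> h; apply: nsq_diota.
transitivity (prodw s y * ((nsq (u + a))^-1) ^+ d).
  exact: (f_equal2 *%R O1 DC).
by rewrite /= mulrC.
Qed.

End D6.


Section Aux.
Context {R : realType}.
Lemma aux_nm (n m q : R) : n <= q -> m <= q -> n * m = 1 -> 0 < n -> q < 1 -> False.
Proof. move=> H1 H2 nm n0 q1; have m0 : 0 <= m by nra. nra. Qed.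
End Aux.

Section Aux2.
Context {R : realType}.

Lemma aux_step (n n' V p e q : R) : 0 < q -> q <= 1 -> 0 < e -> e <= 1 ->
  1 <= q * n -> 0 <= V -> V <= 4 * q * e ^+ 2 -> 2 * e * p <= e ^+ 2 * n + V ->
  n' = n + 2 * p + V -> n' <= (1 + 9 * e) * n.
Proof.
move=> q0 q1 e0 e1 qn V0 VB P nE.
have n0 : 0 < n by nra.
have S1 : e * n' <= e * n + e ^+ 2 * n + V + e * V by rewrite nE; nra.
have S2 : V + e * V <= 8 * q * e ^+ 2 by nra.
have e20 : 0 <= e ^+ 2 by rewrite sqr_ge0.
have S3 : q * e ^+ 2 <= q ^+ 2 * e ^+ 2 * n.
  have : 0 <= q * e ^+ 2 * (q * n - 1).
    by apply: mulr_ge0; [apply: mulr_ge0; lra | lra].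
  lra.
have S4 : q ^+ 2 * e ^+ 2 * n <= e ^+ 2 * n.
  apply: ler_wpM2r; first by nra.
  by rewrite -[X in _ <= X]mul1r; apply: ler_wpM2r => //; rewrite expr_le1 //; nra.
have S5 : e * n' <= e * ((1 + 9 * e) * n) by nra.
by rewrite -(ler_pM2l e0).
Qed.

Lemma aux_inv (n n' k : R) : 0 < n -> 0 < n' -> n' <= k * n -> n^-1 <= k * n'^-1.
Proof.
move=> n0 n'0 H.
rewrite -(ler_pM2r n0) -(ler_pM2r n'0) mulVf ?gt_eqF // mul1r.
have -> : k * n'^-1 * n * n' = k * n by field; rewrite gt_eqF.
by [].
Qed.

Lemma aux_geom (q : R) n : 0 <= q -> q < 1 -> \sum_(i < n) q ^+ i <= (1 - q)^-1.
Proof.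
move=> q0 q1.
have E : (\sum_(i < n) q ^+ i) * (1 - q) = 1 - q ^+ n.
  elim: n => [|n IH]; first by rewrite big_ord0 expr0 mul0r subrr.
  by rewrite big_ord_recr /= mulrDl IH exprS; ring.
rewrite -(ler_pM2r (_ : 0 < 1 - q)); last by rewrite subr_gt0.
by rewrite E mulVf ?gt_eqF ?subr_gt0 // lerBlDr lerDl exprn_ge0.
Qed.

Lemma aux_inv2 (n q : R) : 0 < n -> n^-1 <= q -> 1 <= q * n.
Proof. by move=> n0 H; rewrite -(mulVf (lt0r_neq0 n0)) ler_pM2r. Qed.

Lemma aux_contr (D E n n' q Q : R) : 0 <= D -> 0 < q -> 1 <= q * n -> 1 <= q * n' ->
  D <= Q * E -> D / (n * n') <= q ^+ 2 * Q * E.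
Proof.
move=> D0 q0 B B' H.
have n0 : 0 < n by nra.
have n'0 : 0 < n' by nra.
have m1 : n^-1 <= q by rewrite -(ler_pM2r n0) mulVf ?gt_eqF.
have m2 : n'^-1 <= q by rewrite -(ler_pM2r n'0) mulVf ?gt_eqF.
have m10 : 0 <= n^-1 by rewrite invr_ge0 ltW.
have m20 : 0 <= n'^-1 by rewrite invr_ge0 ltW.
rewrite invfM.
have S1 : n^-1 * n'^-1 <= q ^+ 2 by rewrite expr2; apply: ler_pM.
have S2 : D * (n^-1 * n'^-1) <= D * q ^+ 2 by apply: ler_wpM2l.
have S3 : D * q ^+ 2 <= Q * E * q ^+ 2 by apply: ler_wpM2r => //; rewrite sqr_ge0.
apply: (le_trans S2); apply: (le_trans S3); by rewrite mulrC mulrA.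
Qed.

Lemma aux_pos (n q : R) : 0 < q -> 1 <= q * n -> 0 < n.
Proof. move=> q0 H; nra. Qed.

End Aux2.

Section D7.
Context {R : realType} {d : nat}.
Local Notation X := 'rV[R]_d.
Variables (iota : X -> X) (Zs Kc : set X) (flr : X -> X) (q : R).
Hypothesis Hi : is_inversion iota.
Hypothesis HZ : is_cocompact_lattice Zs.
Hypothesis HB : is_boundary_choice Zs Kc flr.
Hypothesis q0 : 0 < q.
Hypothesis q1 : q < 1.
Hypothesis HK : forall x, Kc x -> nsq x <= q.

Lemma dir_nsq x z : dirichlet Zs x -> Zs z -> nsq x <= nsq (x - z).
Proof.
move=> Hx Hz; have := Hx z Hz.
rewrite -(subr0 x) -!edist_sq subr0 => H.
by apply: lerXn2r => //; rewrite nnegrE /Defs.edist enorm_ge0.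
Qed.

Lemma KcZ0 x : Kc x -> Zs x -> x = 0.
Proof.
case: HB => sub _ _ Kx Zx; have := dir_nsq (sub _ Kx) Zx.
rewrite subrr {2}/nsq ip0l => H.
by apply/eqP; rewrite -nsq_eq0 eq_le H nsq_ge0.
Qed.

Lemma ZsN a : Zs a -> Zs (- a).
Proof. by case: HZ => Z0 Zsub _ _ Za; rewrite -sub0r; apply: Zsub. Qed.

Lemma flr_shift z a : Kc z -> Zs a -> flr (z + a) = a.
Proof. by case: HB => _ _ U Kz Za; symmetry; apply: U => //; rewrite addrK. Qed.

Lemma cyl_Kc s x : cyl Kc iota s x -> Kc x.
Proof. by case: s => [|a s] //= []. Qed.

Lemma T_step a s x : Zs a -> cyl Kc iota (a :: s) x ->
  cyl Kc iota s (Tmap iota flr x) /\ iota (Tmap iota flr x + a) = x.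
Proof.
move=> Za [Kx [w [z Cz <-] <-]].
have Tz : Tmap iota flr (iota (z + a)) = z.
  rewrite /Tmap; case: eqP => [E | NE].
    have za : z + a = 0 by rewrite -(iotaK Hi (z + a)) E iota0.
    have zE : z = - a by apply/eqP; rewrite -addr_eq0 za.
    by apply/esym/KcZ0; [exact: cyl_Kc Cz | rewrite zE; exact: ZsN].
  by rewrite iotaK // flr_shift ?addrK //; exact: cyl_Kc Cz.
by rewrite Tz.
Qed.

Fixpoint chain (s : seq X) (y : X) : Prop :=
  match s with
  | [::] => Kc y
  | a :: s' => Kc (Tinv iota (a :: s') y) /\ chain s' y
  end.

Lemma chain_Kc s y : chain s y -> Kc (Tinv iota s y).
Proof. by case: s => [|a s] //= []. Qed.

Lemma chain_base s y : chain s y -> Kc y.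
Proof. by elim: s => [|a s IH] //= [_ /IH]. Qed.

Lemma orbitT s x : (forall a, a \in s -> Zs a) -> cyl Kc iota s x ->
  chain s (iter (size s) (Tmap iota flr) x) /\
  Tinv iota s (iter (size s) (Tmap iota flr) x) = x.
Proof.
elim: s x => [|a s IH] x Hs Cx; first by [].
have Za : Zs a by apply: Hs; rewrite mem_head.
have Hs' : forall b, b \in s -> Zs b by move=> b hb; apply: Hs; rewrite in_cons hb orbT.
have [Cz Ex] := T_step Za Cx.
have [Ch Ti] := IH _ Hs' Cz.
have E : Tinv iota (a :: s) (iter (size (a :: s)) (Tmap iota flr) x) = x.
  rewrite iterSr; set y := iter (size s) (Tmap iota flr) (Tmap iota flr x) in Ch Ti *.
  transitivity (iota (Tinv iota s y + a)); first by [].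
  by rewrite Ti Ex.
split; last exact: E.
split; last by rewrite iterSr.
by rewrite E; exact: cyl_Kc Cx.
Qed.

Lemma Tinv0 s y : chain s y -> (forall a, a \in s -> Zs a) ->
  Tinv iota s y = 0 -> y = 0.
Proof.
elim: s => [|a s IH] //= [_ Ch] Hs E.
have Za : Zs a by apply: Hs; rewrite mem_head.
have Hs' : forall b, b \in s -> Zs b by move=> b hb; apply: Hs; rewrite in_cons hb orbT.
have ua : Tinv iota s y + a = 0 by rewrite -(iotaK Hi (_ + a)) E iota0.
have uE : Tinv iota s y = - a by apply/eqP; rewrite -addr_eq0 ua.
apply: IH => //; apply: KcZ0; first exact: chain_Kc.
rewrite uE; exact: ZsN.
Qed.

Lemma zero_digit s y : chain s y -> (forall a, a \in s -> Zs a) -> 0 \in s -> y = 0.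
Proof.
elim: s => [|a s IH] //= [K1 Ch] Hs.
have Hs' : forall b, b \in s -> Zs b by move=> b hb; apply: Hs; rewrite in_cons hb orbT.
rewrite in_cons => /orP [/eqP a0 | H0]; last exact: IH.
subst a; apply: (Tinv0 Ch Hs').
have Ku := chain_Kc Ch; set u := Tinv iota s y in K1 Ku *.
rewrite addr0 in K1.
apply/eqP/negP => /negP u0.
have n0 : 0 < nsq u by apply: nsq_gt0.
have H1 := HK Ku; have H2 := HK K1; rewrite nsq_iota // in H2.
have nm : nsq u * (nsq u)^-1 = 1 by rewrite mulfV // gt_eqF.
move: H1 H2 nm n0; move: (nsq u) ((nsq u)^-1) => n m H1 H2 nm n0.
exact: (aux_nm H1 H2 nm n0 q1).
Qed.

Fixpoint wbig (s : seq X) (y : X) : Prop :=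
  match s with
  | [::] => True
  | a :: s' => 1 <= q * nsq (Tinv iota s' y + a) /\ wbig s' y
  end.

Lemma wbig_good s y : wbig s y -> wgood iota s y.
Proof.
elim: s => [|a s IH] //= [H /IH G]; split => //.
apply/eqP => w0; by rewrite w0 /nsq ip0l mulr0 ler10 in H.
Qed.

Lemma nz_wbig s y : chain s y -> (forall a, a \in s -> Zs a /\ a != 0) -> wbig s y.
Proof.
elim: s => [|a s IH] //= [K1 Ch] Hs.
have [Za a0] := Hs a (mem_head _ _).
have Hs' : forall b, b \in s -> Zs b /\ b != 0 by move=> b hb; apply: Hs; rewrite in_cons hb orbT.
split; last exact: IH.
have Ku := chain_Kc Ch; set u := Tinv iota s y in Ku K1 *.
have w0 : u + a != 0.
  apply/eqP => w0; have uE : u = - a by apply/eqP; rewrite -addr_eq0 w0.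
  have := KcZ0 Ku; rewrite uE => /(_ (ZsN Za)) /eqP.
  by rewrite oppr_eq0 (negbTE a0).
have := HK K1; rewrite nsq_iota // => H.
by apply: aux_inv2 => //; apply: nsq_gt0.
Qed.

Lemma prodw_ge0 s y : 0 <= prodw iota s y.
Proof.
elim: s => [|a s IH] /=; first exact: ler01.
by apply: mulr_ge0 => //; apply: exprn_ge0; rewrite invr_ge0 nsq_ge0.
Qed.

Lemma nsq_diff_Kc y y' : Kc y -> Kc y' -> nsq (y - y') <= 4 * q.
Proof.
move=> K K'; have := nsq_ge0 (y + y'); rewrite nsqD nsqB.
have := HK K; have := HK K'; lra.
Qed.

Lemma contract s y y' : chain s y -> chain s y' -> wbig s y -> wbig s y' ->
  nsq (Tinv iota s y - Tinv iota s y') <= q ^+ (2 * size s) * nsq (y - y').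
Proof.
elim: s => [|a s IH]; first by move=> *; rewrite muln0 expr0 mul1r.
move=> [_ C] [_ C'] [B W] [B' W'].
have IH' := IH C C' W W'.
have w0 : Tinv iota s y + a != 0.
  by apply/eqP => w0; rewrite w0 /nsq ip0l mulr0 ler10 in B.
have w'0 : Tinv iota s y' + a != 0.
  by apply/eqP => w1; rewrite w1 /nsq ip0l mulr0 ler10 in B'.
change (nsq (iota (Tinv iota s y + a) - iota (Tinv iota s y' + a)) <=
  q ^+ (2 * (size s).+1) * nsq (y - y')).
rewrite nsq_iotaB // mulnS exprD.
have -> : Tinv iota s y + a - (Tinv iota s y' + a) = Tinv iota s y - Tinv iota s y'.
  by rewrite (addrC (Tinv iota s y') a) addrKA.
by apply: aux_contr => //; apply: nsq_ge0.
Qed.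

Lemma ratio s y y' : chain s y -> chain s y' -> wbig s y -> wbig s y' ->
  prodw iota s y <= expR (9 * d%:R * \sum_(i < size s) q ^+ i) * prodw iota s y'.
Proof.
elim: s => [|a s IH].
  by move=> *; rewrite big_ord0 mulr0 expR0 mul1r.
move=> [_ C] [_ C'] [B W] [B' W'].
have IH' := IH C C' W W'.
set u := Tinv iota s y; set u' := Tinv iota s y'.
set e := q ^+ size s.
set n := nsq (u + a); set n' := nsq (u' + a).
have e0 : 0 < e by rewrite exprn_gt0.
have e1 : e <= 1 by rewrite exprn_ile1 // ltW.
have n0 : 0 < n := aux_pos q0 B.
have n'0 : 0 < n' := aux_pos q0 B'.
set v := (u' + a) - (u + a).
have vE : v = u' - u by rewrite /v (addrC u a) addrKA.
have VB : nsq v <= 4 * q * e ^+ 2.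
  rewrite vE; have := contract C' C W' W.
  have := nsq_diff_Kc (chain_base C') (chain_base C).
  rewrite -/u -/u' => H1 H2; apply: (le_trans H2).
  rewrite mulnC exprM -/e [4 * q * _]mulrC.
  by apply: ler_wpM2l => //; exact: sqr_ge0.
have PB : 2 * e * ip (u + a) v <= e ^+ 2 * n + nsq v.
  have := nsq_ge0 (e *: (u + a) - v); rewrite nsqB nsqZ ipZl -/n; lra.
have nE : n' = n + 2 * ip (u + a) v + nsq v.
  by rewrite /n' -nsqD /v; congr nsq; rewrite [RHS]addrC subrK.
have St := aux_step q0 (ltW q1) e0 e1 B (nsq_ge0 v) VB PB nE.
have Iv := aux_inv n0 n'0 St.

have Xd : (n^-1) ^+ d <= expR (d%:R * (9 * e)) * (n'^-1) ^+ d.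
  rewrite expRM_natl -exprMn; apply: lerXn2r.
  - by rewrite nnegrE invr_ge0 ltW.
  - rewrite nnegrE; apply: mulr_ge0; first exact: ltW (expR_gt0 _).
    by rewrite invr_ge0 ltW.
  apply: (le_trans Iv); apply: ler_wpM2r; first by rewrite invr_ge0 ltW.
  exact: expR_ge1Dx.
change (n^-1 ^+ d * prodw iota s y <=
  expR (9 * d%:R * \sum_(i < (size s).+1) q ^+ i) * (n'^-1 ^+ d * prodw iota s y')).
rewrite big_ord_recr /= -/e.
have -> : expR (9 * d%:R * (\sum_(i < size s) q ^+ i + e)) * (n'^-1 ^+ d * prodw iota s y') =
  (expR (d%:R * (9 * e)) * n'^-1 ^+ d) * (expR (9 * d%:R * \sum_(i < size s) q ^+ i) * prodw iota s y').
  rewrite [RHS]mulrACA -expRD; congr (expR _ * _).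
  ring.
apply: ler_pM => //.
- by apply: exprn_ge0; rewrite invr_ge0 ltW.
- exact: prodw_ge0.
Qed.

Lemma key s x x' : (forall a, a \in s -> Zs a) -> cyl Kc iota s x -> cyl Kc iota s x' ->
  omega iota s (iter (size s) (Tmap iota flr) x) <=
  (expR (9 * d%:R * (1 - q)^-1) + 1) * omega iota s (iter (size s) (Tmap iota flr) x').
Proof using Hi HZ HB q0 q1 HK.
move=> Hs Cx Cx'.
have [Ch _] := orbitT Hs Cx; have [Ch' _] := orbitT Hs Cx'.
set y := iter _ _ x in Ch *; set y' := iter _ _ x' in Ch' *.
have L1 : 1 <= expR (9 * d%:R * (1 - q)^-1) + 1 by rewrite lerDr ltW // expR_gt0.
case: (boolP (0 \in s)) => [H0 | H0].
  have -> : y = 0 by apply: zero_digit Ch Hs H0.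
  have -> : y' = 0 by apply: zero_digit Ch' Hs H0.
  by apply: ler_peMl => //; exact: normr_ge0.
have Hs' : forall a, a \in s -> Zs a /\ a != 0.
  move=> a ha; split; first exact: Hs.
  by apply/eqP => a0; rewrite -a0 ha in H0.
have W := nz_wbig Ch Hs'; have W' := nz_wbig Ch' Hs'.
have [_ O] := omega_prod Hi (wbig_good W).
have [_ O'] := omega_prod Hi (wbig_good W').
rewrite O O'; apply: (le_trans (ratio Ch Ch' W W')).
apply: ler_wpM2r; first exact: prodw_ge0.
apply: (@le_trans _ _ (expR (9 * d%:R * (1 - q)^-1))); last by rewrite lerDl.
rewrite ler_expR; apply: ler_wpM2l; first by rewrite mulr_ge0 // ler0n.
apply: aux_geom => //; exact: ltW.
Qed.

End D7.

Unset Implicit Arguments. Set Strict Implicit.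



Theorem lemma4p3 (R : realType) (d : nat) (iota : 'rV[R]_d -> 'rV[R]_d)
  (Zs Kc : set 'rV[R]_d) (flr : 'rV[R]_d -> 'rV[R]_d) :
  is_inversion iota ->
  is_cocompact_lattice Zs ->
  is_boundary_choice Zs Kc flr ->
  norm_euclidean Zs ->
  exists2 L : R, 1 < L &
    forall s : seq 'rV[R]_d, (forall a, a \in s -> Zs a) ->
      cyl Kc iota s !=set0 ->
      let A := iter (size s) (Tmap iota flr) @` cyl Kc iota s in
      (ereal_sup [set (omega iota s y)%:E | y in A]
        <= L%:E * ereal_inf [set (omega iota s y)%:E | y in A])%E.
Proof.
move=> Hi HZ HB [c0 c01 Hc].
have c00 : 0 <= c0.
  case: HB => sub Hf _; have [_ Kk] := Hf 0.
  apply: (le_trans (enorm_ge0 (0 - flr 0))); apply: Hc; apply: sub; exact: Kk.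
set c := (c0 + 1) / 2.
have cc0 : c0 <= c by rewrite /c; lra.
have c0' : 0 < c by rewrite /c; lra.
have c1 : c < 1 by rewrite /c; lra.
set q := c ^+ 2.
have q0 : 0 < q by rewrite /q exprn_gt0.
have q1 : q < 1 by rewrite /q expr_lt1 // ltW.
have HK : forall x, Kc x -> nsq x <= q.
  move=> x Kx; case: HB => sub _ _.
  rewrite -enorm_sq /q; apply: lerXn2r.
  - by rewrite nnegrE enorm_ge0.
  - by rewrite nnegrE ltW.
  apply: (le_trans _ cc0); apply: Hc; apply: sub; exact: Kx.
set L := expR (9 * d%:R * (1 - q)^-1) + 1.
apply: (@ex_intro2 _ _ _ L); first by rewrite /L ltrDr expR_gt0.
move=> s Hs [x0 Cx0]; cbv zeta.
set A := [set iter (size s) (Tmap iota flr) x | x in cyl Kc iota s].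
have KEY : forall y y', A y -> A y' -> omega iota s y <= L * omega iota s y'.
  move=> y y' [x Cx <-] [x' Cx' <-].
  exact: (key Hi HZ HB q0 q1 HK Hs Cx Cx').
have Ay0 : A (iter (size s) (Tmap iota flr) x0) by exists x0.
set y0 := iter (size s) (Tmap iota flr) x0 in Ay0.
set S := [set (omega iota s y)%:E | y in A].
have L0 : 0 < L by rewrite /L ltr_wpDl ?ltr01 // ltW // expR_gt0.
have supub : forall y', A y' -> (ereal_sup S <= (L * omega iota s y')%:E)%E.
  move=> y' Ay'; apply: ge_ereal_sup => _ [y Ay <-]; rewrite lee_fin.
  exact: KEY.
have suplb : ((omega iota s y0)%:E <= ereal_sup S)%E.
  by apply: ereal_sup_ubound; exists y0.
have supfin : ereal_sup S \is a fin_num.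
  rewrite fin_numE; apply/andP; split.
    by apply/eqP => E; rewrite E leeNy_eq in suplb.
  by apply/eqP => E; have := supub _ Ay0; rewrite E leye_eq.
set r := fine (ereal_sup S).
have rE : ereal_sup S = r%:E by rewrite /r fineK.
have inflb : ((r / L)%:E <= ereal_inf S)%E.
  apply: le_ereal_inf_tmp => _ [y' Ay' <-]; rewrite lee_fin.
  have := supub _ Ay'; rewrite rE lee_fin => H.
  by rewrite ler_pdivrMr // mulrC.
rewrite rE; apply: (@le_trans _ _ (L%:E * (r / L)%:E)%E).
  by rewrite -EFinM lee_fin mulrC divfK // gt_eqF.
by apply: lee_wpmul2l => //; rewrite lee_fin ltW.
Qed.
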